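(* Let $\mathbf G$ be a finite group and let $p_1,\dots,p_n$ ($n\ge 2$) be all the distinct prime divisors of $\lvert G\rvert$. Let $\Gamma=\mathcal G_e(\mathbf G)$ and $\Gamma_{p_i}=\Gamma[G_{p_i}]$. Suppose that for each $i>2$, $\mathbf G$ has a unique Sylow $p_i$-subgroup and it is cyclic. Then the strong product $\Gamma_{p_1}\boxtimes\Gamma_{p_2}\boxtimes\cdots\boxtimes\Gamma_{p_n}$ is a Berge graph.
   Context: The enhanced power graph $\mathcal G_e(\mathbf G)$ has vertex set $G$, distinct $x,y$ adjacent iff $\langle x,y\rangle$ is cyclic. For a prime $p$, $G_p$ is the set of elements of $\mathbf G$ whose order is a power of $p$ (including the identity); $\Gamma[X]$ is the induced subgraph on $X$. The strong product $\boxtimes_{i=1}^n\Gamma_i$ has vertex set $\prod_i V(\Gamma_i)$, and distinct tuples $\bar x,\bar y$ are adjacent iff for every $i$, $\bar x(i)=\bar y(i)$ or $\bar x(i)\sim_{\Gamma_i}\bar y(i)$. A graph is Berge if neither it nor its complement contains an induced cycle of odd length at least $5$. *)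

(* Defs.v *)
From mathcomp Require Import all_boot fingroup morphism cyclic pgroup sylow.
Set Implicit Arguments. Unset Strict Implicit. Unset Printing Implicit Defensive.

(* Finite simple graphs given by a vertex set V : {set T} in a finType T and
   an adjacency relation e (only used on distinct vertices of V). *)

Definition induced_cycle (T : finType) (V : {set T}) (e : rel T) (k : nat)
    (c : 'I_k -> T) : Prop :=
  injective c /\ (forall i, c i \in V) /\
  (forall i j : 'I_k, i != j ->
     e (c i) (c j) = ((i.+1 %% k == j) || (j.+1 %% k == i))).

Definition has_odd_hole (T : finType) (V : {set T}) (e : rel T) : Prop :=
  exists k (c : 'I_k -> T), [/\ odd k, 5 <= k & induced_cycle V e c].

Definition compl_rel (T : finType) (e : rel T) : rel T :=
  fun x y => (x != y) && ~~ e x y.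

Definition berge (T : finType) (V : {set T}) (e : rel T) : Prop :=
  ~ has_odd_hole V e /\ ~ has_odd_hole V (compl_rel e).

Definition epg_rel (gT : finGroupType) : rel gT :=
  fun x y => (x != y) && cyclic <<[set x; y]>>.

Definition Gp (gT : finGroupType) (G : {set gT}) (p : nat) : {set gT} :=
  [set x in G | p_elt p x].

Definition sprod_V (T : finType) (n : nat) (Vs : 'I_n -> {set T}) :
    {set {ffun 'I_n -> T}} :=
  [set f : {ffun 'I_n -> T} | [forall i, f i \in Vs i]].

Definition sprod_rel (T : finType) (n : nat) (es : 'I_n -> rel T) :
    rel {ffun 'I_n -> T} :=
  fun f g => (f != g) && [forall i, (f i == g i) || es i (f i) (g i)].

(* Main.v *)
Require Import Defs.
From mathcomp Require Import all_boot fingroup morphism cyclic pgroup sylow.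
From mathcomp Require Import zify.
Set Implicit Arguments. Unset Strict Implicit. Unset Printing Implicit Defensive.

Definition idx (k : nat) (hk : 0 < k) (m : nat) : 'I_k := Ordinal (ltn_pmod m hk).

Definition cyc (k : nat) (i j : 'I_k) := (i.+1 %% k == j) || (j.+1 %% k == i).

Lemma idx_neq k (hk : 0 < k) m d : 0 < d < k -> idx hk m != idx hk (m + d).
Proof.
move=> /andP[d0 dk]; apply/negP => /eqP/(congr1 val) /= /eqP.
rewrite -{1}(addn0 m) eqn_modDl mod0n modn_small //; lia.
Qed.

Lemma idx_eq k (hk : 0 < k) m m' : m = m' %[mod k] -> idx hk m = idx hk m'.
Proof. by move=> h; apply: val_inj. Qed.

Lemma cyc_idx k (hk : 0 < k) m d :
  cyc (idx hk m) (idx hk (m + d)) = (1 == d %[mod k]) || (d.+1 == 0 %[mod k]).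
Proof.
rewrite /cyc /= -addn1 modnDml addn1 -addn1 eqn_modDl; congr (_ || _).
rewrite -addn1 modnDml -addnA -{2}(addn0 m) eqn_modDl addn1.
by rewrite [0 %% k]mod0n.
Qed.


Lemma no_hole (T : finType) (V : {set T}) (e : rel T) (I0 : T -> T -> bool)
  (Hsym : forall x y, e x y = e y x)
  (Hflip : forall a b c d, a \in V -> b \in V -> c \in V -> d \in V ->
     a != c -> ~~ e a c -> b != d -> ~~ e b d -> e b a -> e b c -> e c d ->
     I0 b d = ~~ I0 a c) :
  ~ has_odd_hole V e.
Proof.
move=> [k [c [ok k5 [inj [inV Hc]]]]].
have hk : 0 < k by lia.
pose w m := c (idx hk m).
have wV m : w m \in V by apply: inV.
have adj m m' d : m' = m + d -> 0 < d < k ->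
    e (w m) (w m') = (1 == d %[mod k]) || (d.+1 == 0 %[mod k]).
  move=> -> hd; rewrite /w Hc ?idx_neq //.
  by have := cyc_idx hk m d; rewrite /cyc => ->.
have neq m m' d : m' = m + d -> 0 < d < k -> w m != w m'.
  by move=> -> hd; rewrite /w (inj_eq inj) idx_neq.
have e1 m m' : m' = m + 1 -> e (w m) (w m').
  by move=> h; rewrite (adj m m' 1 h) ?eqxx //; lia.
have e1' m m' : m' = m + 1 -> e (w m') (w m).
  by move=> h; rewrite Hsym; apply: e1.
have e2 m m' : m' = m + 2 -> ~~ e (w m) (w m').
  by move=> h; rewrite (adj m m' 2 h); [rewrite !modn_small //; lia | lia].
have n2 m m' : m' = m + 2 -> w m != w m'.
  by move=> h; apply: (neq m m' 2 h); lia.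
pose P m := I0 (w m) (w (m + 2)).
have step m : P (m + 1) = ~~ P m.
  rewrite /P (Hflip (w m) (w (m + 1)) (w (m + 2)) (w (m + 1 + 2))) //.
  - exact: n2.
  - exact: e2.
  - exact: n2.
  - exact: e2.
  - exact: e1'.
  - by apply: e1; rewrite -addnA.
  - by apply: e1; rewrite -!addnA.
have Pm m : P m = odd m (+) P 0.
  elim: m => [|m IH] //; by rewrite -addn1 step IH addn1 /= negb_add.
have Pk : P k = P 0.
  rewrite /P /w (@idx_eq k hk k 0) ?modnn ?mod0n //.
  by rewrite (@idx_eq k hk (k + 2) (0 + 2)) // modnDl add0n.
by move: (Pm k); rewrite Pk ok; case: (P 0).
Qed.

Lemma no_antihole (T : finType) (V : {set T}) (e : rel T) (I0 : T -> T -> bool)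
  (Hsym : forall x y, e x y = e y x)
  (Hflip : forall a b c d, a \in V -> b \in V -> c \in V -> d \in V ->
     a != c -> ~~ e a c -> b != d -> ~~ e b d -> e b a -> e b c -> e c d ->
     I0 b d = ~~ I0 a c) :
  ~ has_odd_hole V (compl_rel e).
Proof.
move=> [k [c [ok k5 [inj [inV Hc]]]]].
have hk : 0 < k by lia.
pose w m := c (idx hk m).
have wV m : w m \in V by apply: inV.
have neq m m' d : m' = m + d -> 0 < d < k -> w m != w m'.
  by move=> -> hd; rewrite /w (inj_eq inj) idx_neq.
have adj m m' d : m' = m + d -> 0 < d < k ->
    e (w m) (w m') = ~~ ((1 == d %[mod k]) || (d.+1 == 0 %[mod k])).
  move=> h hd; have := Hc (idx hk m) (idx hk m').
  rewrite h idx_neq // => /(_ isT).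
  have := cyc_idx hk m d; rewrite /cyc => -> <-.
  by rewrite /compl_rel -/(w m) -/(w (m + d)) (neq m (m + d) d) //= negbK.
have f1 m m' : m' = m + 1 -> ~~ e (w m) (w m').
  by move=> h; rewrite (adj m m' 1 h) ?eqxx //; lia.
have f2 m m' : m' = m + 2 -> e (w m) (w m').
  by move=> h; rewrite (adj m m' 2 h); [rewrite !modn_small //; lia | lia].
have f3 m m' : m' = m + 3 -> e (w m) (w m').
  by move=> h; rewrite (adj m m' 3 h); [rewrite !modn_small //; lia | lia].
have n1 m m' : m' = m + 1 -> w m != w m'.
  by move=> h; apply: (neq m m' 1 h); lia.
pose Q m := I0 (w m) (w (m + 1)).
have A j : Q (j + 3) = ~~ Q j.
  rewrite /Q (Hflip (w j) (w (j + 3)) (w (j + 1)) (w (j + 3 + 1))) //.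
  - exact: n1.
  - exact: f1.
  - exact: n1.
  - exact: f1.
  - by rewrite Hsym; apply: f3.
  - by rewrite Hsym; apply: f2; rewrite -addnA.
  - by apply: f3; rewrite -!addnA.
have B j : Q (j + 1) = ~~ Q (j + 3).
  rewrite /Q (Hflip (w (j + 3)) (w (j + 1)) (w (j + 3 + 1)) (w (j + 1 + 1))) //.
  - exact: n1.
  - exact: f1.
  - exact: n1.
  - exact: f1.
  - by apply: f2; rewrite -addnA.
  - by apply: f3; rewrite -!addnA.
  - by rewrite Hsym; apply: f2; rewrite -!addnA.
move: (A 0) (B 0) (A 1) (B 1) (A 2) (B 2).
rewrite /= ?add0n.
have -> : 1 + 3 = 4 by [].
have -> : 2 + 3 = 5 by [].
have -> : 1 + 1 = 2 by [].
have -> : 2 + 1 = 3 by [].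
by case: (Q 0); case: (Q 1); case: (Q 2); case: (Q 3); case: (Q 4); case: (Q 5).
Qed.

Local Open Scope group_scope.

Definition cmp (gT : finGroupType) (x y : gT) := (x == y) || epg_rel x y.

Lemma cmp_of_le (gT : finGroupType) (x y z : gT) :
  x \in <[z]> -> y \in <[z]> -> cmp x y.
Proof.
move=> xz yz; rewrite /cmp /epg_rel; case: eqP => //= _.
apply: (cyclicS _ (cycle_cyclic z)); rewrite gen_subG.
by apply/subsetP=> u; rewrite !inE => /orP[]/eqP->.
Qed.

Lemma le_of_cmp (gT : finGroupType) (p : nat) (x y : gT) :
  p_elt p x -> p_elt p y -> cmp x y -> (x \in <[y]>) || (y \in <[x]>).
Proof.
move=> px py; rewrite /cmp /epg_rel; case: eqP => [->|_] /=.
  by rewrite cycle_id.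
set H := <<_>> => cH.
have xH : <[x]> \subset H by rewrite cycle_subG mem_gen // !inE eqxx.
have yH : <[y]> \subset H by rewrite cycle_subG mem_gen // !inE eqxx orbT.
have [a oa] := p_natP px; have [b ob] := p_natP py.
have := cardSg_cyclic cH xH yH; have := cardSg_cyclic cH yH xH.
rewrite !cycle_subG => <- <-.
move: oa ob; rewrite !orderE => -> ->.
case: (leqP a b) => ab; first by rewrite dvdn_exp2l.
rewrite orbC dvdn_exp2l //; exact: ltnW.
Qed.

Lemma cmp_sym (gT : finGroupType) (x y : gT) : cmp x y = cmp y x.
Proof.
rewrite /cmp /epg_rel eq_sym; case: eqP => //= _.
suff -> : [set x; y] = [set y; x] by [].
by apply/setP=> u; rewrite !inE orbC.
Qed.

Lemma notle (gT : finGroupType) (p : nat) (x y z : gT) :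
  p_elt p x -> p_elt p y ->
  ~~ cmp x z -> cmp y x -> cmp y z -> z \notin <[y]>.
Proof.
move=> px py nxz yx yz; apply/negP=> zy.
case/orP: (le_of_cmp py px yx) => [yinx | xiny].
  have sub : <[y]> \subset <[x]> by rewrite cycle_subG.
  by move: nxz; rewrite (cmp_of_le (cycle_id x) (subsetP sub _ zy)).
by move: nxz; rewrite (cmp_of_le xiny zy).
Qed.

Lemma key (gT : finGroupType) (p : nat) (x y z w : gT) :
  p_elt p x -> p_elt p y -> p_elt p z -> p_elt p w ->
  ~~ cmp x z -> cmp y x -> cmp y z -> ~~ cmp y w -> cmp z w -> False.
Proof.
move=> px py pz pw nxz yx yz nyw zw.
have h1 := notle px py nxz yx yz.
have h2 := notle pw pz (etrans (congr1 negb (cmp_sym w y)) nyw) zw (etrans (cmp_sym z y) yz).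
by case/orP: (le_of_cmp py pz yz) => h; [move/negP: h2 | move/negP: h1].
Qed.

Lemma cmp_in_cyclic (gT : finGroupType) (P : {group gT}) (x y : gT) :
  cyclic P -> x \in P -> y \in P -> cmp x y.
Proof.
move=> cP xP yP; rewrite /cmp /epg_rel; case: eqP => //= _.
apply: (cyclicS _ cP); rewrite gen_subG.
by apply/subsetP=> u; rewrite !inE => /orP[]/eqP->.
Qed.

Lemma in_unique_syl (gT : finGroupType) (G P : {group gT}) (p : nat) (x : gT) :
  'Syl_p(G) = [set P] -> x \in G -> p_elt p x -> x \in P.
Proof.
move=> hS xG px.
have sxG : <[x]> \subset G by rewrite cycle_subG.
have [Q sylQ sQ] := Sylow_superset sxG px.
have : Q \in 'Syl_p(G) by rewrite inE.
rewrite hS => /set1P eQ.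
by rewrite -cycle_subG -eQ.
Qed.

Theorem mainTheorem3 (gT : finGroupType) (G : {group gT}) (ps : seq nat) :
  uniq ps ->
  (forall p, (p \in ps) = (p \in primes #|G|)) ->
  2 <= size ps ->
  (forall i, 2 <= i < size ps ->
     exists P : {group gT}, 'Syl_(nth 0 ps i)(G) = [set P] /\ cyclic P) ->
  berge (sprod_V (fun i : 'I_(size ps) => Gp G (nth 0 ps i)))
        (sprod_rel (fun _ : 'I_(size ps) => @epg_rel gT)).
Proof.
move=> _ _ hn hsyl.
set n := size ps in hn hsyl *.
set V := sprod_V _; set e := sprod_rel _.
have h0 : 0 < n by apply: leq_trans hn.
have h1 : 1 < n by [].
pose i0 : 'I_n := Ordinal h0; pose i1 : 'I_n := Ordinal h1.
have inVP f i : f \in V -> (f i \in G) && p_elt (nth 0 ps i) (f i).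
  by rewrite /V /sprod_V inE => /forallP /(_ i); rewrite /Gp inE.
have adjc f g i : e f g -> cmp (f i) (g i).
  by case/andP=> _ /forallP /(_ i).
have esym f g : e f g = e g f.
  rewrite /e /sprod_rel eq_sym; congr (_ && _); apply: eq_forallb => i.
  exact: (cmp_sym (f i) (g i)).
have big f g (i : 'I_n) : 2 <= i -> f \in V -> g \in V -> cmp (f i) (g i).
  move=> hi fV gV; have [P [hP cP]] := hsyl i (introT andP (conj hi (ltn_ord i))).
  case/andP: (inVP f i fV) => fG pf; case/andP: (inVP g i gV) => gG pg.
  exact: (cmp_in_cyclic cP (in_unique_syl hP fG pf) (in_unique_syl hP gG pg)).
have nonadj f g : f \in V -> g \in V -> f != g -> ~~ e f g ->
    ~~ cmp (f i0) (g i0) || ~~ cmp (f i1) (g i1).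
  move=> fV gV nfg; rewrite /e /sprod_rel nfg /= negb_forall => /existsP [i hi0].
  have hi : ~~ cmp (f i) (g i) := hi0.
  case: (leqP 2 i) => hi2; first by move: hi; rewrite (big f g i hi2 fV gV).
  case: i hi hi0 hi2 => [[|[|m]] Hm] hi _ hi2 //.
  - have e0 : Ordinal Hm = i0 by apply: val_inj.
    by rewrite -e0 hi.
  - have e0 : Ordinal Hm = i1 by apply: val_inj.
    by rewrite -e0 hi orbT.
have keyG (i : 'I_n) a b c d : a \in V -> b \in V -> c \in V -> d \in V ->
    ~~ cmp (a i) (c i) -> e b a -> e b c -> ~~ cmp (b i) (d i) -> e c d -> False.
  move=> aV bV cV dV nac ba bc nbd cd.
  case/andP: (inVP a i aV) => _ pa; case/andP: (inVP b i bV) => _ pb.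
  case/andP: (inVP c i cV) => _ pc; case/andP: (inVP d i dV) => _ pd.
  exact: (key pa pb pc pd nac (adjc _ _ i ba) (adjc _ _ i bc) nbd (adjc _ _ i cd)).
have Hflip a b c d : a \in V -> b \in V -> c \in V -> d \in V ->
     a != c -> ~~ e a c -> b != d -> ~~ e b d -> e b a -> e b c -> e c d ->
     (fun f g => ~~ cmp (f i0) (g i0)) b d = ~~ (fun f g => ~~ cmp (f i0) (g i0)) a c.
  move=> aV bV cV dV nac eac nbd ebd ba bc cd /=.
  have A := nonadj a c aV cV nac eac; have B := nonadj b d bV dV nbd ebd.
  have K0 := keyG i0 a b c d aV bV cV dV; have K1 := keyG i1 a b c d aV bV cV dV.
  move: A B K0 K1.
  case: (cmp (a i0) (c i0)); case: (cmp (a i1) (c i1));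
  case: (cmp (b i0) (d i0)); case: (cmp (b i1) (d i1)) => //= _ _ K0 K1;
  by [exfalso; apply: K0 | exfalso; apply: K1].
split.
- exact: (no_hole esym Hflip).
- exact: (no_antihole esym Hflip).
Qed.
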